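(* Let $\tilde p\in\mathbb{R}^{dn}$ be a target formation (i.e. $\|\tilde p_i-\tilde p_j\|=d_{ij}$ for all $(i,j)\in\mathcal{E}$ and $\tilde p_j-\tilde p_i=\hat p_j-\hat p_i$ for all $(i,j)\in\mathcal{E}_o$) which is infinitesimally rigid, and suppose the orientation edges are selected as follows: all edges of $\mathcal{E}_o$ are incident to a common agent $i_0$; if $d=2$, $\mathcal{E}_o\neq\emptyset$; if $d=3$, $\mathcal{E}_o$ contains two edges $(i_0,j),(i_0,j')$ whose desired vectors $\hat p_j-\hat p_{i_0}$ and $\hat p_{j'}-\hat p_{i_0}$ are linearly independent. Then the matrix \[ \mathcal{F}:=R(\tilde p)^TR(\tilde p)+L_o\otimes I_d \] is positive semidefinite and has exactly $d$ zero eigenvalues; moreover $\mathrm{null}(\mathcal{F})=\mathrm{null}(H\otimes I_d)=\mathrm{span}(\mathbf{1}_n\otimes I_d)$ (the column span of $\mathbf{1}_n\otimes I_d$).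
   Context: Let $d\in\{2,3\}$, $n\ge2$. $\mathcal{G}=(\mathcal{V},\mathcal{E})$ is an undirected graph on $\{1,\dots,n\}$ with $m$ edges, each edge $k$ given an arbitrary orientation (head $j$, tail $i$); $H\in\mathbb{R}^{m\times n}$ is the incidence matrix ($h_{ki}=1$ if edge $k$ sinks at $i$, $-1$ if it leaves $i$, $0$ otherwise). For $p\in\mathbb{R}^{dn}$, $z=(H\otimes I_d)p$ with $z_k=p_j-p_i$, $Z(z)=\mathrm{diag}(z_1,\dots,z_m)\in\mathbb{R}^{dm\times m}$ block diagonal, and the rigidity matrix is $R(p)=Z(z)^T(H\otimes I_d)$. The framework $(\mathcal{G},p)$ is infinitesimally rigid iff $\mathrm{rank}\,R(p)=dn-d(d+1)/2$. Edges carry desired distances $d_{ij}>0$. $\mathcal{E}_o\subseteq\mathcal{E}$ is a set of orientation edges, $L_o$ the Laplacian of the undirected graph $(\mathcal{V},\mathcal{E}_o)$, and for each $(i,j)\in\mathcal{E}_o$ a desired relative vector $\hat p_j-\hat p_i\in\mathbb{R}^d$ with $\|\hat p_j-\hat p_i\|=d_{ij}$ is prescribed. $\mathbf{1}_n$ is the all-ones vector. *)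

(* Defs.v *)
From HB Require Import structures.
From mathcomp Require Import all_boot all_order all_algebra.
From mathcomp Require Export mxtens.
Set Implicit Arguments. Unset Strict Implicit. Unset Printing Implicit Defensive.
Import Order.TTheory GRing.Theory Num.Theory.
Local Open Scope ring_scope.

Section Formation.
Variable R : realFieldType.

Definition simple_graph (m n : nat) (tl hd : 'I_m -> 'I_n) : Prop :=
  (forall k, tl k != hd k) /\
  (forall k k', ((tl k == tl k') && (hd k == hd k')) ||
                ((tl k == hd k') && (hd k == tl k')) -> k = k').

Definition incidence (m n : nat) (tl hd : 'I_m -> 'I_n) : 'M[R]_(m, n) :=
  \matrix_(k, i) (if i == hd k then 1 else if i == tl k then -1 else 0).

(* p_i, the i-th block of p in R^{dn} (index (i,a) |-> i*d + a). *)
Definition pos (n d : nat) (p : 'cV[R]_(n * d)) (i : 'I_n) : 'cV[R]_d :=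
  \col_a p (mxtens_index (i, a)) 0.

(* Z(z) = diag(z_1,...,z_m), block diagonal dm x m. *)
Definition Zmat (m d : nat) (z : 'cV[R]_(m * d)) : 'M[R]_(m * d, m) :=
  \matrix_(r, l) (if (mxtens_unindex r).1 == l then z r 0 else 0).

Definition rigidity (m n d : nat) (H : 'M[R]_(m, n)) (p : 'cV[R]_(n * d))
  : 'M[R]_(m, n * d) :=
  (Zmat ((H *t (1%:M : 'M[R]_d)) *m p))^T *m (H *t (1%:M : 'M[R]_d)).

Definition inf_rigid (m n d : nat) (H : 'M[R]_(m, n)) (p : 'cV[R]_(n * d)) :=
  \rank (rigidity H p) = (n * d - d * (d + 1) %/ 2)%N.

Definition laplacian (m n : nat) (tl hd : 'I_m -> 'I_n) (O : {set 'I_m})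
  : 'M[R]_n :=
  \matrix_(i, j)
    (if i == j then (#|[set k in O | (tl k == i) || (hd k == i)]|)%:R
     else - (#|[set k in O | ((tl k == i) && (hd k == j))
                          || ((tl k == j) && (hd k == i))]|)%:R).

Definition sqnorm (d : nat) (v : 'cV[R]_d) : R := \sum_a v a 0 ^+ 2.

Definition psd (N : nat) (F : 'M[R]_N) : Prop :=
  forall x : 'cV[R]_N, 0 <= (x^T *m F *m x) 0 0.

End Formation.

(* Main.v *)
Require Import Defs.
From HB Require Import structures.
From mathcomp Require Import all_boot all_order all_algebra.
From mathcomp Require Import mxtens.
From mathcomp Require Import zify ring lra.
Set Implicit Arguments. Unset Strict Implicit. Unset Printing Implicit Defensive.
Import Order.TTheory GRing.Theory Num.Theory.
Local Open Scope ring_scope.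

Section Infra.
Variable R : realFieldType.

Lemma sum_tens p q (f : 'I_(p * q) -> R) :
  \sum_k f k = \sum_i \sum_j f (mxtens_index (i, j)).
Proof.
rewrite pair_big /= (reindex (@mxtens_index p q)) /=; last first.
  by exists (@mxtens_unindex p q) => x _; rewrite (mxtens_indexK, mxtens_unindexK).
by apply: eq_bigr => -[i j].
Qed.

Lemma tens1E p q d s (A : 'M[R]_(p, q)) (Y : 'M[R]_(q * d, s)) k a j :
  ((A *t (1%:M : 'M[R]_d)) *m Y) (mxtens_index (k, a)) j
  = \sum_i A k i * Y (mxtens_index (i, a)) j.
Proof.
rewrite mxE sum_tens; apply: eq_bigr => i _.
rewrite (bigD1 a) //= big1 => [|b nba].
  by rewrite tensmxE mxE eqxx mulr1 addr0.
by rewrite tensmxE mxE eq_sym (negbTE nba) mulr0 mul0r.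
Qed.

Lemma posE n d (x : 'cV[R]_(n * d)) i a : pos x i a 0 = x (mxtens_index (i, a)) 0.
Proof. by rewrite mxE. Qed.

Lemma inc_sum m n (tl hd : 'I_m -> 'I_n) k (y : 'I_n -> R) :
  tl k != hd k ->
  \sum_i incidence R tl hd k i * y i = y (hd k) - y (tl k).
Proof.
move=> ne; rewrite (bigD1 (hd k)) //= (bigD1 (tl k)) ?ne //= big1 => [|i /andP[ni1 ni2]].
  by rewrite !mxE eqxx (negbTE ne) eqxx addr0 mul1r mulN1r.
by rewrite mxE (negbTE ni1) (negbTE ni2) mul0r.
Qed.

Lemma TE m n d s (tl hd : 'I_m -> 'I_n) (Y : 'M[R]_(n * d, s)) k a j :
  tl k != hd k ->
  ((incidence R tl hd *t (1%:M : 'M[R]_d)) *m Y) (mxtens_index (k, a)) j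
  = Y (mxtens_index (hd k, a)) j - Y (mxtens_index (tl k, a)) j.
Proof. by move=> ne; rewrite tens1E (inc_sum (fun i => Y (mxtens_index (i, a)) j)). Qed.

Lemma ZtE m d s (z : 'cV[R]_(m * d)) (W : 'M[R]_(m * d, s)) k j :
  ((Zmat z)^T *m W) k j = \sum_a z (mxtens_index (k, a)) 0 * W (mxtens_index (k, a)) j.
Proof.
rewrite mxE sum_tens (bigD1 k) //= [X in _ + X]big1 ?addr0 => [|k' nk].
  by apply: eq_bigr => a _; rewrite !mxE mxtens_indexK eqxx.
by rewrite big1 // => a _; rewrite !mxE mxtens_indexK /= (negbTE nk) mul0r.
Qed.

Lemma rigE m n d s (tl hd : 'I_m -> 'I_n) (p : 'cV[R]_(n * d)) (Y : 'M[R]_(n * d, s)) k j :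
  tl k != hd k ->
  (rigidity (incidence R tl hd) p *m Y) k j =
  \sum_a (p (mxtens_index (hd k, a)) 0 - p (mxtens_index (tl k, a)) 0)
       * (Y (mxtens_index (hd k, a)) j - Y (mxtens_index (tl k, a)) j).
Proof.
move=> ne; rewrite /rigidity -mulmxA ZtE; apply: eq_bigr => a _.
by rewrite !TE.
Qed.

End Infra.

Section Mup.
Variable R : realFieldType.

Lemma sym_disj N p (F : 'M[R]_N) (W : 'M[R]_(p, N)) :
  F^T = F -> W *m F = 0 -> (W <= F)%MS -> W = 0.
Proof.
move=> sF WF /submxP[Y eW].
have WW : W *m W^T = 0.
  by rewrite {2}eW trmx_mul sF mulmxA WF mul0mx.
apply/matrixP => i j; rewrite mxE.
have : (W *m W^T) i i = 0 by rewrite WW mxE.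
rewrite mxE => /eqP; rewrite psumr_eq0 => [/allP H|l _]; last first.
  by rewrite mxE -expr2 sqr_ge0.
by move: (H j (mem_index_enum j)); rewrite mxE -expr2 sqrf_eq0 => /eqP.
Qed.

Lemma char_poly_sim n (F P Bk : 'M[R]_n) :
  P \in unitmx -> P *m F = Bk *m P -> char_poly F = char_poly Bk.
Proof.
move=> uP PF.
have eF : F = invmx P *m Bk *m P by rewrite -mulmxA -PF mulKmx.
have e : char_poly_mx F = map_mx (@polyC R) (invmx P) *m char_poly_mx Bk *m map_mx polyC P.
  rewrite /char_poly_mx mulmxBr mulmxBl -!map_mxM -eF; congr (_ - _).
  by rewrite mul_mx_scalar -scalemxAl -map_mxM mulVmx // map_mx1 scalemx1.
rewrite /char_poly e !det_mulmx mulrC mulrA -det_mulmx -map_mxM.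
by rewrite mulmxV // map_mx1 det1 mul1r.
Qed.

Lemma sym_mup k r (F : 'M[R]_(k + r)) :
  F^T = F -> \rank (kermx F) = k -> mup 0 (char_poly F) = k.
Proof.
move=> sF hK.
have rF : \rank F = r.
  by move: hK (rank_leq_col F); rewrite mxrank_ker; lia.
pose B1 : 'M_(k, k + r) := castmx (hK, erefl) (row_base (kermx F)).
pose B2 : 'M_(r, k + r) := castmx (rF, erefl) (row_base F).
have eB1 : (B1 :=: kermx F)%MS := eqmx_trans (eqmx_cast _ _) (eq_row_base _).
have eB2 : (B2 :=: F)%MS := eqmx_trans (eqmx_cast _ _) (eq_row_base _).
have B1F : B1 *m F = 0 by apply/sub_kermxP; rewrite eB1.
have [C hC] : exists C, B2 *m F = C *m B2.
  by apply/submxP; rewrite eB2 submxMl.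
have B2free : row_free B2 by rewrite /row_free eB2 rF.
pose P := col_mx B1 B2.
have disj0 : (B1 :&: B2)%MS = 0.
  apply: (sym_disj sF).
    by apply/sub_kermxP; rewrite -eB1 capmxSl.
  by rewrite -eB2 capmxSr.
have uP : P \in unitmx.
  rewrite -row_free_unit /row_free /P -addsmxE mxrank_disjoint_sum //.
  by rewrite eB1 eB2 hK rF.
have PF : P *m F = block_mx 0 0 0 C *m P.
  by rewrite /P mul_col_mx mul_block_col B1F hC !mul0mx !add0r.
have uC : C \in unitmx.
  rewrite -row_free_unit -kermx_eq0; apply/eqP.
  apply: (row_free_inj B2free); rewrite mul0mx /=.
  apply: (sym_disj sF); last by rewrite -eB2 submxMl.
  by rewrite -mulmxA hC mulmxA mulmx_ker mul0mx.
rewrite (char_poly_sim uP PF) /char_poly char_block_diag_mx det_ublock.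
rewrite mupMl.
  rewrite /char_poly_mx map_mx0 subr0 det_scalar.
  by rewrite -[X in X ^+ _]subr0 -polyC0 mup_XsubCX eqxx.
rewrite -/(char_poly C) /root horner_coef0 char_poly_det mulf_eq0 negb_or.
rewrite expf_eq0 oppr_eq0 oner_eq0 andbF /=.
by rewrite -unitfE -unitmxE.
Qed.

Lemma row_free_of_inj p N (M : 'M[R]_(p, N)) :
  (forall u : 'rV_p, u *m M = 0 -> u = 0) -> row_free M.
Proof.
move=> H; rewrite -kermx_eq0; apply/eqP/row_matrixP => i.
by rewrite row0; apply: H; rewrite -row_mul mulmx_ker row0.
Qed.

Lemma kernel_span m N D (Rm : 'M[R]_(m, N)) (M : 'M[R]_(D, N)) :
  \rank Rm = (N - D)%N -> (D <= N)%N -> M *m Rm^T = 0 -> row_free M ->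
  forall x : 'cV_N, Rm *m x = 0 -> exists u : 'rV_D, x^T = u *m M.
Proof.
move=> rR DN MR fM x Rx.
have sMK : (M <= kermx Rm^T)%MS by apply/sub_kermxP.
have rK : \rank (kermx Rm^T) = D by rewrite mxrank_ker mxrank_tr rR; lia.
have /eqmxP eMK : (M == kermx Rm^T)%MS.
  by rewrite -(mxrank_leqif_eq sMK) rK; move/eqP: fM => ->.
apply/submxP; rewrite eMK; apply/sub_kermxP.
by rewrite -trmx_mul Rx trmx0.
Qed.

Lemma sym_mup_gen k N (F : 'M[R]_N) :
  (k <= N)%N -> F^T = F -> \rank (kermx F) = k -> mup 0 (char_poly F) = k.
Proof.
move=> kN; have e : (k + (N - k) = N)%N by rewrite subnKC.
by move: (@sym_mup k (N - k)); rewrite e; apply.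
Qed.

End Mup.

Section Lap.
Variable R : realFieldType.

Definition incO m n (tl hd : 'I_m -> 'I_n) (O : {set 'I_m}) : 'M[R]_(m, n) :=
  \matrix_(k, i) (if k \in O then incidence R tl hd k i else 0).

Lemma cardR m (P : pred 'I_m) : (#|[set k | P k]|)%:R = \sum_k (if P k then 1 else 0) :> R.
Proof.
rewrite -sum1_card natr_sum big_mkcond; apply: eq_bigr => k _; rewrite inE.
by case: (P k).
Qed.

Lemma lapE m n (tl hd : 'I_m -> 'I_n) (O : {set 'I_m}) :
  (forall k, tl k != hd k) ->
  laplacian R tl hd O = (incO tl hd O)^T *m incO tl hd O.
Proof.
move=> ne; apply/matrixP => i j; rewrite !mxE.
case: eqP => [<-|nij].
  rewrite cardR; apply: eq_bigr => k _; rewrite !mxE.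
  case: (k \in O) => /=; last by rewrite mul0r.
  rewrite ![tl k == _]eq_sym ![hd k == _]eq_sym.
  have h1 : ~~ ((i == hd k) && (i == tl k)).
    by apply/andP => -[/eqP e1 /eqP e2]; move: (ne k); rewrite -e1 -e2 eqxx.
  move: h1; case: (i == hd k); case: (i == tl k) => //= _;
    by rewrite ?mulr1 ?mul1r ?mulr0 ?mul0r ?mulrN1 ?mulN1r ?opprK ?oppr0.
rewrite cardR -sumrN; apply: eq_bigr => k _; rewrite !mxE.
case: (k \in O) => /=; last by rewrite mul0r oppr0.
rewrite ![tl k == _]eq_sym ![hd k == _]eq_sym.
have h1 : ~~ ((i == hd k) && (i == tl k)).
  by apply/andP => -[/eqP e1 /eqP e2]; move: (ne k); rewrite -e1 -e2 eqxx.
have h2 : ~~ ((j == hd k) && (j == tl k)).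
  by apply/andP => -[/eqP e1 /eqP e2]; move: (ne k); rewrite -e1 -e2 eqxx.
have h3 : ~~ ((i == hd k) && (j == hd k)).
  by apply/andP => -[/eqP e1 /eqP e2]; apply: nij; rewrite e1 e2.
have h4 : ~~ ((i == tl k) && (j == tl k)).
  by apply/andP => -[/eqP e1 /eqP e2]; apply: nij; rewrite e1 e2.
move: h1 h2 h3 h4; case: (i == hd k); case: (i == tl k);
  case: (j == hd k); case: (j == tl k) => //= _ _ _ _;
  by rewrite ?mulr1 ?mul1r ?mulr0 ?mul0r ?mulrN1 ?mulN1r ?opprK ?oppr0.
Qed.
End Lap.

Section CF.
Variable R : realFieldType.

Lemma cf0 (o0 o1 o2 a0 a1 a2 b0 b1 b2 : R) :
  o1*a2 - o2*a1 = 0 -> o2*a0 - o0*a2 = 0 -> o0*a1 - o1*a0 = 0 ->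
  o1*b2 - o2*b1 = 0 -> o2*b0 - o0*b2 = 0 -> o0*b1 - o1*b0 = 0 ->
  (forall al be : R, al*a0 + be*b0 = 0 -> al*a1 + be*b1 = 0 -> al*a2 + be*b2 = 0 ->
     al = 0 /\ be = 0) ->
  o0 = 0.
Proof.
move=> ha1 ha2 ha3 hb1 hb2 hb3 fr.
apply/eqP; apply/negP => /negP no.
have [eb ea] : b0 = 0 /\ - a0 = 0.
  apply: fr.
  - ring.
  - apply: (mulfI no); rewrite mulr0.
    have e1 : o0 * a1 = o1 * a0 by apply/eqP; rewrite -subr_eq0 ha3.
    have e2 : o0 * b1 = o1 * b0 by apply/eqP; rewrite -subr_eq0 hb3.
    transitivity (b0 * (o0 * a1) - a0 * (o0 * b1)); first ring.
    by rewrite e1 e2; ring.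
  - apply: (mulfI no); rewrite mulr0.
    have e1 : o0 * a2 = o2 * a0 by apply/eqP; rewrite -subr_eq0 -opprB ha2 oppr0.
    have e2 : o0 * b2 = o2 * b0 by apply/eqP; rewrite -subr_eq0 -opprB hb2 oppr0.
    transitivity (b0 * (o0 * a2) - a0 * (o0 * b2)); first ring.
    by rewrite e1 e2; ring.
have a00 : a0 = 0 by apply/eqP; rewrite -oppr_eq0 ea.
have a10 : a1 = 0.
  apply: (mulfI no); rewrite mulr0.
  by move: ha3; rewrite a00 mulr0 subr0.
have a20 : a2 = 0.
  apply: (mulfI no); rewrite mulr0.
  by move/eqP: ha2; rewrite a00 mulr0 sub0r oppr_eq0 => /eqP.
have [] := fr 1 0; rewrite ?a00 ?a10 ?a20; try ring.
by move=> /eqP; rewrite oner_eq0.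
Qed.

Lemma cross_free (o0 o1 o2 a0 a1 a2 b0 b1 b2 : R) :
  o1*a2 - o2*a1 = 0 -> o2*a0 - o0*a2 = 0 -> o0*a1 - o1*a0 = 0 ->
  o1*b2 - o2*b1 = 0 -> o2*b0 - o0*b2 = 0 -> o0*b1 - o1*b0 = 0 ->
  (forall al be : R, al*a0 + be*b0 = 0 -> al*a1 + be*b1 = 0 -> al*a2 + be*b2 = 0 ->
     al = 0 /\ be = 0) ->
  [/\ o0 = 0, o1 = 0 & o2 = 0].
Proof.
move=> ha1 ha2 ha3 hb1 hb2 hb3 fr; split.
- exact: (cf0 ha1 ha2 ha3 hb1 hb2 hb3 fr).
- apply: (cf0 ha2 ha3 ha1 hb2 hb3 hb1) => al be e1 e2 e0.
  exact: fr.
- apply: (cf0 ha3 ha1 ha2 hb3 hb1 hb2) => al be e2 e0 e1.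
  exact: fr.
Qed.
End CF.

Section Assembly.
Variable R : realFieldType.

Definition sq p (y : 'cV[R]_p) := \sum_i y i 0 ^+ 2.

Lemma quadE N p (A : 'M[R]_(p, N)) (x : 'cV_N) : (x^T *m (A^T *m A) *m x) 0 0 = sq (A *m x).
Proof.
rewrite mulmxA -trmx_mul -mulmxA mxE; apply: eq_bigr => i _; rewrite mxE expr2.
by [].
Qed.

Lemma sq_ge0 p (y : 'cV[R]_p) : 0 <= sq y.
Proof. by apply: sumr_ge0 => i _; rewrite sqr_ge0. Qed.

Lemma sq_eq0 p (y : 'cV[R]_p) : sq y = 0 -> y = 0.
Proof.
move=> /eqP; rewrite psumr_eq0 => [/allP H|i _]; last by rewrite sqr_ge0.
apply/matrixP => i j; rewrite ord1 mxE.
by move: (H i (mem_index_enum i)); rewrite sqrf_eq0 => /eqP.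
Qed.

Lemma main_core d n m (tl hd : 'I_m -> 'I_n) (O : {set 'I_m}) (pt : 'cV[R]_(n * d))
  (ne : forall k, tl k != hd k) (i0 : 'I_n)
  (key : forall x, rigidity (incidence R tl hd) pt *m x = 0 ->
     (forall k, k \in O -> pos x (hd k) = pos x (tl k)) -> forall i j, pos x i = pos x j) :
  let H := incidence R tl hd in
  let F := (rigidity H pt)^T *m rigidity H pt
           + laplacian R tl hd O *t (1%:M : 'M[R]_d) in
  [/\ psd F,
      mup 0 (char_poly F) = d,
      (forall x : 'cV[R]_(n * d),
         F *m x = 0 <-> (H *t (1%:M : 'M[R]_d)) *m x = 0) &
      (forall x : 'cV[R]_(n * d),
         (H *t (1%:M : 'M[R]_d)) *m x = 0 <->
         exists y : 'cV[R]_(1 * d),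
           x = ((const_mx 1 : 'cV[R]_n) *t (1%:M : 'M[R]_d)) *m y)].
Proof.
move=> H F.
set T := H *t (1%:M : 'M[R]_d).
set G1 := rigidity H pt.
set HO := incO R tl hd O.
set G2 := HO *t (1%:M : 'M[R]_d).
set one := (const_mx 1 : 'cV[R]_n) *t (1%:M : 'M[R]_d).
have eF : F = G1^T *m G1 + G2^T *m G2.
  rewrite /F (lapE R) // /G2 trmx_tens trmx1 tensmx_mul mulmx1 //.
have sF : F^T = F by rewrite eF linearD /= !trmx_mul !trmxK.
have quad x : (x^T *m F *m x) 0 0 = sq (G1 *m x) + sq (G2 *m x).
  by rewrite eF mulmxDr mulmxDl mxE quadE quadE.
have G2E (x : 'cV[R]_(n * d)) k a : (G2 *m x) (mxtens_index (k, a)) 0 =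
    if k \in O then x (mxtens_index (hd k, a)) 0 - x (mxtens_index (tl k, a)) 0 else 0.
  rewrite tens1E; case: ifP => kO.
    by rewrite -(@inc_sum _ _ _ tl hd k (fun i => x (mxtens_index (i, a)) 0) (ne k)); apply: eq_bigr => i _; rewrite mxE kO.
  by rewrite big1 // => i _; rewrite mxE kO mul0r.
have H1 : H *m (const_mx 1 : 'cV[R]_n) = 0.
  apply/matrixP => k c; rewrite ord1 [LHS]mxE.
  by rewrite (@inc_sum _ _ _ tl hd k (fun i => (const_mx 1 : 'cV[R]_n) i 0) (ne k)) !mxE subrr.
have HO1 : HO *m (const_mx 1 : 'cV[R]_n) = 0.
  apply/matrixP => k c; rewrite ord1 [LHS]mxE [RHS]mxE.
  case: (boolP (k \in O)) => kO; last by rewrite big1 // => i _; rewrite mxE (negbTE kO) mul0r.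
  rewrite (eq_bigr (fun i => H k i * (const_mx 1 : 'cV[R]_n) i 0)); last by move=> i _; rewrite [HO _ _]mxE kO.
  by rewrite (@inc_sum _ _ _ tl hd k (fun i => (const_mx 1 : 'cV[R]_n) i 0) (ne k)) !mxE subrr.
have T1 : T *m one = 0 by rewrite /T /one tensmx_mul H1 tens0mx.
have G11 : G1 *m one = 0 by rewrite /G1 /rigidity -mulmxA T1 mulmx0.
have G21 : G2 *m one = 0 by rewrite /G2 /one tensmx_mul HO1 tens0mx.
have F1 : F *m one = 0.
  by rewrite eF mulmxDl -mulmxA G11 -mulmxA G21 !mulmx0 addr0.
have to_one x : G1 *m x = 0 -> (forall k, k \in O -> pos x (hd k) = pos x (tl k)) ->
    exists y, x = one *m y.
  move=> G1x Ox; have cx := key x G1x Ox.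
  exists (\col_r (pos x i0) (mxtens_unindex r).2 0).
  apply/matrixP => r c; rewrite ord1; case: (mxtens_indexP r) => i a.
  rewrite tens1E big_ord1 !mxE mxtens_indexK /= mul1r.
  by have := congr1 (fun v : 'cV[R]_d => v a 0) (cx i i0); rewrite /= !posE => ->.
have Tx0 x : T *m x = 0 -> G1 *m x = 0 /\ (forall k, k \in O -> pos x (hd k) = pos x (tl k)).
  move=> Tx; split; first by rewrite /G1 /rigidity -mulmxA -/T Tx mulmx0.
  move=> k _; apply/matrixP => a c; rewrite ord1 !posE; apply/eqP; rewrite -subr_eq0.
  by rewrite -(TE x a 0 (ne k)) -/H -/T Tx mxE.
have one0 (y : 'cV[R]_(1 * d)) : T *m (one *m y) = 0 by rewrite mulmxA T1 mul0mx.
have claim3 (x : 'cV[R]_(n * d)) : F *m x = 0 <-> T *m x = 0.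
  split => [Fx|Tx].
    have q0 : sq (G1 *m x) + sq (G2 *m x) = 0 by rewrite -quad -mulmxA Fx mulmx0 mxE.
    move/eqP: q0; rewrite paddr_eq0 ?sq_ge0 // => /andP[/eqP/sq_eq0 g1 /eqP/sq_eq0 g2].
    have hO : forall k, k \in O -> pos x (hd k) = pos x (tl k).
      move=> k kO; apply/matrixP => a c; rewrite ord1 !posE; apply/eqP; rewrite -subr_eq0.
      by move: (G2E x k a); rewrite kO g2 mxE => <-.
    by have [y ->] := to_one x g1 hO; apply: one0.
  have [g1 hO] := Tx0 x Tx; have [y ->] := to_one x g1 hO.
  by rewrite mulmxA F1 mul0mx.
have claim4 (x : 'cV[R]_(n * d)) : T *m x = 0 <-> exists y, x = one *m y.
  split => [Tx|[y ->]]; last exact: one0.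
  by have [g1 hO] := Tx0 x Tx; apply: to_one.
split => //.
- by move=> x; rewrite quad; apply: addr_ge0; apply: sq_ge0.
- have rfo : row_free one^T.
    apply: row_free_of_inj => u ou0.
    have ou : one *m u^T = 0 by rewrite -[LHS]trmxK trmx_mul trmxK ou0 trmx0.
    apply/matrixP => c r; rewrite ord1 mxE.
    case: (mxtens_indexP r) => j a; rewrite ord1.
    have := congr1 (fun M : 'cV[R]_(n * d) => M (mxtens_index (i0, a)) 0) ou.
    by rewrite /= /one tens1E big_ord1 !mxE mul1r => ->.
  have eK : (kermx F == one^T)%MS.
    apply/andP; split; last first.
      by apply/sub_kermxP; rewrite -[F]sF -trmx_mul F1 trmx0.
    apply/row_subP => r.
    have Fw : F *m (row r (kermx F))^T = 0.
      by rewrite -{1}[F]sF -trmx_mul -row_mul mulmx_ker row0 trmx0.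
    have [y ey] := (claim4 _).1 ((claim3 _).1 Fw).
    by rewrite -[row r _]trmxK ey trmx_mul submxMl.
  have rK : \rank (kermx F) = d.
    by rewrite (eqmxP eK); move/eqP: rfo => ->; rewrite mul1n.
  apply: sym_mup_gen => //.
  by rewrite -{1}rK rank_leq_col.
Qed.
End Assembly.

Section K2.
Variable R : realFieldType.

Lemma key2 n m (tl hd : 'I_m -> 'I_n) (O : {set 'I_m}) (pt : 'cV[R]_(n * 2)) :
  (forall k, tl k != hd k) -> (2 <= n)%N ->
  \rank (rigidity (incidence R tl hd) pt) = (n * 2 - 3)%N ->
  (exists2 k0, k0 \in O & pos pt (hd k0) - pos pt (tl k0) != 0) ->
  forall x, rigidity (incidence R tl hd) pt *m x = 0 ->
     (forall k, k \in O -> pos x (hd k) = pos x (tl k)) -> forall i j, pos x i = pos x j.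
Proof.
move=> ne hn rR [k0 k0O w0] x G1x Ox.
pose p i a := pt (mxtens_index (i, a)) 0.
pose f (r : 'I_3) i (a : 'I_2) : R :=
  if (r : nat) == 0%N then ((a : nat) == 0%N)%:R
  else if (r : nat) == 1%N then ((a : nat) == 1%N)%:R
  else if (a : nat) == 0%N then - p i (lift ord0 ord0) else p i ord0.
pose M : 'M[R]_(3, n * 2) := \matrix_(r, c) f r (mxtens_unindex c).1 (mxtens_unindex c).2.
have uME (u : 'rV[R]_3) i a : (u *m M) 0 (mxtens_index (i, a)) =
    u 0 ord0 * f ord0 i a + u 0 (lift ord0 ord0) * f (lift ord0 ord0) i a
    + u 0 (lift ord0 (lift ord0 ord0)) * f (lift ord0 (lift ord0 ord0)) i a.
  by rewrite mxE !big_ord_recl big_ord0 addr0 !mxE mxtens_indexK addrA.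
have wE a : (pos pt (hd k0) - pos pt (tl k0)) a 0 = p (hd k0) a - p (tl k0) a.
  by rewrite !mxE.
have cancel3 (a b c X Y : R) : a + b + c * X = a + b + c * Y -> c != 0 -> X = Y.
  move=> e nc; apply: (mulfI nc); exact: (addrI (a + b)).
have rot0 (u : 'rV[R]_3) :
    (forall a, (u *m M) 0 (mxtens_index (hd k0, a)) = (u *m M) 0 (mxtens_index (tl k0, a))) ->
    u 0 (lift ord0 (lift ord0 ord0)) = 0.
  move=> hu; have e0 := hu ord0; have e1 := hu (lift ord0 ord0).
  rewrite !uME /f /= in e0 e1.
  apply/eqP; apply: contraNT w0 => nu2.
  have {}e0 := cancel3 _ _ _ _ _ e0 nu2; have {}e1 := cancel3 _ _ _ _ _ e1 nu2.
  apply/eqP/matrixP => a c; rewrite ord1 wE [RHS]mxE; apply/eqP; rewrite subr_eq0; apply/eqP.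
  case: a => [[|[|//]] ha].
    by rewrite (_ : Ordinal ha = ord0) //; apply: val_inj.
  rewrite (_ : Ordinal ha = lift ord0 ord0); last by apply: val_inj.
  by apply: oppr_inj.
have fM : row_free M.
  apply: row_free_of_inj => u uM0.
  have u2 : u 0 (lift ord0 (lift ord0 ord0)) = 0 by apply: rot0 => a; rewrite uM0 !mxE.
  have e0 := uME u (hd k0) ord0; have e1 := uME u (hd k0) (lift ord0 ord0).
  rewrite uM0 u2 /f /= !mxE in e0 e1.
  apply/rowP => r; rewrite mxE; case: r => [[|[|[|//]]] hr].
  - rewrite (_ : Ordinal hr = ord0); last by apply: val_inj.
    by move: e0; rewrite mulr1 mulr0 mul0r !addr0 => <-.
  - rewrite (_ : Ordinal hr = lift ord0 ord0); last by apply: val_inj.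
    by move: e1; rewrite mulr1 mulr0 mul0r addr0 add0r => <-.
  - by rewrite (_ : Ordinal hr = lift ord0 (lift ord0 ord0)) //; apply: val_inj.
have MG : M *m (rigidity (incidence R tl hd) pt)^T = 0.
  apply/matrixP => r k; rewrite -[M *m _]trmxK trmx_mul trmxK mxE rigE //.
  rewrite !big_ord_recl big_ord0 !mxE !mxtens_indexK /f /=.
  case: r => [[|[|[|//]]] hr] /=; rewrite ?subrr ?mulr0 ?addr0 //.
  by rewrite -opprD mulrN [X in _ + X]mulrC addNr.
have h3 : (3 <= n * 2)%N by lia.
have [u xu] := kernel_span rR h3 MG fM G1x.
have xE i a : x (mxtens_index (i, a)) 0 = (u *m M) 0 (mxtens_index (i, a)).
  by rewrite -xu mxE.
have u2 : u 0 (lift ord0 (lift ord0 ord0)) = 0.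
  apply: rot0 => a; rewrite -!xE -!posE.
  by rewrite (Ox k0 k0O).
move=> i j; apply/matrixP => a c; rewrite ord1 !posE !xE !uME u2 !mul0r.
by [].
Qed.
End K2.

Section K3.
Variable R : realFieldType.

Lemma diff_eq (L L' G : R) : L = L' -> G = L - L' -> G = 0.
Proof. by move=> -> ->; rewrite subrr. Qed.

Lemma key3 n m (tl hd : 'I_m -> 'I_n) (O : {set 'I_m}) (pt : 'cV[R]_(n * 3)) k1 k2 :
  (forall k, tl k != hd k) -> (2 <= n)%N ->
  \rank (rigidity (incidence R tl hd) pt) = (n * 3 - 6)%N ->
  k1 \in O -> k2 \in O ->
  (forall al be : R, al *: (pos pt (hd k1) - pos pt (tl k1))
                     + be *: (pos pt (hd k2) - pos pt (tl k2)) = 0 -> al = 0 /\ be = 0) ->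
  forall x, rigidity (incidence R tl hd) pt *m x = 0 ->
     (forall k, k \in O -> pos x (hd k) = pos x (tl k)) -> forall i j, pos x i = pos x j.
Proof.
move=> ne hn rR k1O k2O fr x G1x Ox.
pose o0 : 'I_3 := ord0. pose o1 : 'I_3 := lift ord0 ord0.
pose o2 : 'I_3 := lift ord0 (lift ord0 ord0).
pose p i a := pt (mxtens_index (i, a)) 0.
pose f (r : 'I_6) i (a : 'I_3) : R :=
  match (r : nat), (a : nat) with
  | 0, 0 | 1, 1 | 2, 2 => 1
  | 3, 1 => - p i o2 | 3, 2 => p i o1
  | 4, 0 => p i o2 | 4, 2 => - p i o0
  | 5, 0 => - p i o1 | 5, 1 => p i o0
  | _, _ => 0 end.
pose M : 'M[R]_(6, n * 3) := \matrix_(r, c) f r (mxtens_unindex c).1 (mxtens_unindex c).2.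
pose r3 : 'I_6 := lift ord0 (lift ord0 (lift ord0 ord0)).
pose r4 : 'I_6 := lift ord0 (lift ord0 (lift ord0 (lift ord0 ord0))).
pose r5 : 'I_6 := lift ord0 (lift ord0 (lift ord0 (lift ord0 (lift ord0 ord0)))).
have uME (u : 'rV[R]_6) i a : (u *m M) 0 (mxtens_index (i, a)) =
    u 0 ord0 * f ord0 i a + u 0 (lift ord0 ord0) * f (lift ord0 ord0) i a
    + u 0 (lift ord0 (lift ord0 ord0)) * f (lift ord0 (lift ord0 ord0)) i a
    + u 0 r3 * f r3 i a + u 0 r4 * f r4 i a + u 0 r5 * f r5 i a.
  by rewrite mxE !big_ord_recl big_ord0 addr0 !mxE mxtens_indexK !addrA.
have crossk (u : 'rV[R]_6) k :
    (forall a, (u *m M) 0 (mxtens_index (hd k, a)) = (u *m M) 0 (mxtens_index (tl k, a))) ->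
    [/\ u 0 r4 * (p (hd k) o2 - p (tl k) o2) - u 0 r5 * (p (hd k) o1 - p (tl k) o1) = 0,
        u 0 r5 * (p (hd k) o0 - p (tl k) o0) - u 0 r3 * (p (hd k) o2 - p (tl k) o2) = 0 &
        u 0 r3 * (p (hd k) o1 - p (tl k) o1) - u 0 r4 * (p (hd k) o0 - p (tl k) o0) = 0].
  move=> hu; have e0 := hu o0; have e1 := hu o1; have e2 := hu o2.
  rewrite !uME /f /= in e0 e1 e2.
  split; [apply: (diff_eq e0)|apply: (diff_eq e1)|apply: (diff_eq e2)]; ring.
have frc : forall al be : R,
    al * (p (hd k1) o0 - p (tl k1) o0) + be * (p (hd k2) o0 - p (tl k2) o0) = 0 ->
    al * (p (hd k1) o1 - p (tl k1) o1) + be * (p (hd k2) o1 - p (tl k2) o1) = 0 ->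
    al * (p (hd k1) o2 - p (tl k1) o2) + be * (p (hd k2) o2 - p (tl k2) o2) = 0 ->
    al = 0 /\ be = 0.
  move=> al be h0 h1 h2; apply: fr; apply/matrixP => a c; rewrite ord1 !mxE.
  case: a => [[|[|[|//]]] ha].
  - by rewrite (_ : Ordinal ha = o0) //; apply: val_inj.
  - by rewrite (_ : Ordinal ha = o1) //; apply: val_inj.
  - by rewrite (_ : Ordinal ha = o2) //; apply: val_inj.
have rot0 (u : 'rV[R]_6) :
    (forall k, k \in O -> forall a,
      (u *m M) 0 (mxtens_index (hd k, a)) = (u *m M) 0 (mxtens_index (tl k, a))) ->
    [/\ u 0 r3 = 0, u 0 r4 = 0 & u 0 r5 = 0].
  move=> hu; have [a1 a2 a3] := crossk u k1 (hu k1 k1O).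
  have [b1 b2 b3] := crossk u k2 (hu k2 k2O).
  exact: (cross_free a1 a2 a3 b1 b2 b3 frc).
have fM : row_free M.
  apply: row_free_of_inj => u uM0.
  have [z3 z4 z5] : [/\ u 0 r3 = 0, u 0 r4 = 0 & u 0 r5 = 0].
    by apply: rot0 => k _ a; rewrite uM0 !mxE.
  have e0 := uME u (hd k1) o0; have e1 := uME u (hd k1) o1; have e2 := uME u (hd k1) o2.
  rewrite uM0 z3 z4 z5 /f /= !mxE in e0 e1 e2.
  apply/rowP => r; rewrite [RHS]mxE; case: r => [[|[|[|[|[|[|//]]]]]] hr].
  - rewrite (_ : Ordinal hr = ord0); last by apply: val_inj.
    by move: e0; rewrite !mulr0 !mul0r !addr0 mulr1 => <-.
  - rewrite (_ : Ordinal hr = lift ord0 ord0); last by apply: val_inj.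
    by move: e1; rewrite !mulr0 !mul0r !addr0 mulr1 add0r => <-.
  - rewrite (_ : Ordinal hr = lift ord0 (lift ord0 ord0)); last by apply: val_inj.
    by move: e2; rewrite !mulr0 !mul0r !addr0 mulr1 !add0r => <-.
  - by rewrite (_ : Ordinal hr = r3) //; apply: val_inj.
  - by rewrite (_ : Ordinal hr = r4) //; apply: val_inj.
  - by rewrite (_ : Ordinal hr = r5) //; apply: val_inj.
have MG : M *m (rigidity (incidence R tl hd) pt)^T = 0.
  apply/matrixP => r k; rewrite -[M *m _]trmxK trmx_mul trmxK mxE rigE //.
  rewrite !big_ord_recl big_ord0 !mxE !mxtens_indexK /f /=.
  rewrite -!/(p _ _).
  by case: r => [[|[|[|[|[|[|//]]]]]] hr] /=; ring.
have h6 : (6 <= n * 3)%N by lia.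
have [u xu] := kernel_span rR h6 MG fM G1x.
have xE i a : x (mxtens_index (i, a)) 0 = (u *m M) 0 (mxtens_index (i, a)).
  by rewrite -xu mxE.
have [z3 z4 z5] : [/\ u 0 r3 = 0, u 0 r4 = 0 & u 0 r5 = 0].
  apply: rot0 => k kO a; rewrite -!xE -!posE.
  by rewrite (Ox k kO).
move=> i j; apply/matrixP => a c; rewrite ord1 !posE !xE !uME z3 z4 z5 !mul0r.
by [].
Qed.
End K3.

Section Fin.
Variable R : realFieldType.

Lemma free2 d (a b : 'cV[R]_d) : free [:: a; b] ->
  forall al be, al *: a + be *: b = 0 -> al = 0 /\ be = 0.
Proof.
move=> Fr; have /freeP H : free (in_tuple [:: a; b]) := Fr. move=> al be e.
have H' := H (fun i : 'I_2 => if i == ord0 then al else be).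
rewrite !big_ord_recl big_ord0 /= addr0 in H'.
have := H' e; move=> h; split; [exact: (h ord0) | exact: (h (lift ord0 ord0))].
Qed.

Lemma free2s d (a b : 'cV[R]_d) (c1 c2 : bool) :
  free [:: (if c1 then a else - a); (if c2 then b else - b)] ->
  forall al be, al *: a + be *: b = 0 -> al = 0 /\ be = 0.
Proof.
move=> F al be e.
have := @free2 d _ _ F (if c1 then al else - al) (if c2 then be else - be); clear F.
case: c1; case: c2 => /=; rewrite ?scaleNr ?scalerN ?opprK => /(_ e) [h1 h2];
  split; first [exact: h1 | exact: h2 | (apply: oppr_inj; rewrite oppr0; first [exact: h1 | exact: h2])].
Qed.

Lemma sqnorm0 d : sqnorm (0 : 'cV[R]_d) = 0.
Proof. by rewrite /sqnorm big1 // => a _; rewrite mxE expr0n. Qed.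

End Fin.

Unset Implicit Arguments. Set Strict Implicit.

Theorem lemma5 (R : realFieldType) (d n m : nat)
  (hd2 : d = 2%N \/ d = 3%N) (hn : (2 <= n)%N)
  (tl hd : 'I_m -> 'I_n) (hG : simple_graph tl hd)
  (dist : 'I_m -> R) (hdist : forall k, 0 < dist k)
  (O : {set 'I_m}) (v : 'I_m -> 'cV[R]_d)
  (hv : forall k, k \in O -> sqnorm (v k) = dist k ^+ 2)
  (pt : 'cV[R]_(n * d))
  (hdistpt : forall k, sqnorm (pos pt (hd k) - pos pt (tl k)) = dist k ^+ 2)
  (hoript : forall k, k \in O -> pos pt (hd k) - pos pt (tl k) = v k)
  (hrig : inf_rigid (incidence R tl hd) pt)
  (hsel : exists i0 : 'I_n,
     (forall k, k \in O -> (tl k == i0) || (hd k == i0)) /\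
     (d = 3%N -> exists k k', [/\ k \in O, k' \in O &
        free [:: (if tl k == i0 then v k else - v k);
                 (if tl k' == i0 then v k' else - v k')]]))
  (hO2 : d = 2%N -> O != set0) :
  let H := incidence R tl hd in
  let F := (rigidity H pt)^T *m rigidity H pt
           + laplacian R tl hd O *t (1%:M : 'M[R]_d) in
  [/\ psd F,
      mup 0 (char_poly F) = d,
      (forall x : 'cV[R]_(n * d),
         F *m x = 0 <-> (H *t (1%:M : 'M[R]_d)) *m x = 0) &
      (forall x : 'cV[R]_(n * d),
         (H *t (1%:M : 'M[R]_d)) *m x = 0 <->
         exists y : 'cV[R]_(1 * d),
           x = ((const_mx 1 : 'cV[R]_n) *t (1%:M : 'M[R]_d)) *m y)].
Proof.
have ne := hG.1.
have [i0 [_ hsel3]] := hsel.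
have key : forall x, rigidity (incidence R tl hd) pt *m x = 0 ->
     (forall k, k \in O -> pos x (hd k) = pos x (tl k)) -> forall i j, pos x i = pos x j.
  case: hd2 => ed; subst d.
  - apply: key2 => //.
    have /set0Pn [k0 k0O] := hO2 erefl.
    exists k0 => //; apply/eqP => w0.
    have := hdistpt k0; rewrite w0 sqnorm0 => /eqP.
    by rewrite eq_sym expf_eq0 /= (gt_eqF (hdist k0)).
  - have [k1 [k2 [k1O k2O fr]]] := hsel3 erefl.
    apply: (key3 ne hn hrig k1O k2O).
    move=> al be; rewrite (hoript k1 k1O) (hoript k2 k2O). exact: (free2s fr).
exact: (main_core ne i0 key).
Qed.
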